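(* Let $(\Gamma,c)$ be a real congruence group with $c=c_0$ (where $c_0(x+iy)=-x+iy$) and such that $\Gamma$ is contained in (the image in $\mathrm{PSL}_2(\mathbf{Z})$ of) $\Gamma_0(N)$ for some $N>2$. Then $X_\Gamma$ has no real elliptic point of even order.
   Context: $\mathfrak{h}$ is the upper half-plane. For a complex conjugation $c$ (anti-holomorphic involution of $\mathfrak h$) and $\gamma\in\mathrm{PSL}_2(\mathbf{R})$, $\gamma^c$ denotes $c\gamma c$. A real congruence group is a pair $(\Gamma,c)$ where $\Gamma\subseteq\mathrm{PSL}_2(\mathbf{Z})$, $c$ is a complex conjugation with $\Gamma^c=\Gamma$, and for some $N\ge1$, $\Gamma$ contains $\Gamma(N)$ (image of matrices $\equiv I\bmod N$) and $\Gamma(N)^c=\Gamma(N)$. $X_\Gamma=\mathfrak{h}^*/\Gamma$ with $\mathfrak h^*=\mathfrak h\cup\mathbf{Q}\mathbf{P}^1$, and $c$ descends to an involution of $X_\Gamma$; a real point is a fixed point. An elliptic point of even order is a point of $\mathfrak{h}$ whose stabilizer in $\Gamma$ has even order. $\Gamma_0(N)$ consists of matrices in $\mathrm{SL}_2(\mathbf{Z})$ with lower-left entry divisible by $N$. *)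

(* Defs.v *)
From HB Require Import structures.
From mathcomp Require Import all_boot all_order all_algebra.
From mathcomp Require Import boolp classical_sets cardinality reals.
From mathcomp Require Import complex.
Set Implicit Arguments.
Unset Strict Implicit.
Unset Printing Implicit Defensive.
Import Order.TTheory GRing.Theory Num.Theory.
Local Open Scope ring_scope.
Local Open Scope classical_set_scope.

(* Elements of SL_2(Z): integer 2x2 matrices of determinant 1.
   PSL_2(Z) = SL_2(Z)/{+-1}; a subgroup Gamma of PSL_2(Z) is encoded by
   its preimage G in SL_2(Z) (a subgroup containing -1). *)
Definition SL2Z (g : 'M[int]_2) : Prop := \det g = 1.

Definition is_PSL2Z_subgroup (G : set 'M[int]_2) : Prop :=
  [/\ (forall g, G g -> SL2Z g),
      G 1%:M,
      (forall g h, G g -> G h -> G (g *m h)),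
      (forall g, G g -> G (invmx g)) &
      (forall g, G g -> G (- g))].

Definition ea (g : 'M[int]_2) := g 0 0.
Definition eb (g : 'M[int]_2) := g 0 1.
Definition ec (g : 'M[int]_2) := g 1 0.
Definition ed (g : 'M[int]_2) := g 1 1.

(* Preimage in SL_2(Z) of Gamma(N) subset PSL_2(Z): matrices congruent to
   +-I modulo N. *)
Definition congI (N : nat) (g : 'M[int]_2) : Prop :=
  forall i j : 'I_2, (N%:Z %| g i j - (i == j)%:Z)%Z.
Definition GammaN (N : nat) (g : 'M[int]_2) : Prop :=
  SL2Z g /\ (congI N g \/ congI N (- g)).

(* Gamma_0(M): lower-left entry divisible by M (a sign-invariant
   condition, so this is also the preimage of its image in PSL_2(Z)). *)
Definition Gamma0 (M : nat) (g : 'M[int]_2) : Prop :=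
  SL2Z g /\ (M%:Z %| ec g)%Z.

Definition c0 (R : rcfType) (z : R[i]) : R[i] := - (Num.conj z).

(* c0 is induced by eps = diag(-1,1) in GL_2(Z); for gamma in PSL_2(R),
   gamma^c0 = c0 gamma c0 is the Moebius map of eps * gamma * eps,
   i.e. [[a,b],[c,d]] |-> [[a,-b],[-c,d]]. *)
Definition eps_c0 : 'M[int]_2 := \matrix_(i < 2, j < 2)
  (if i == j then (if i == 0 then -1 else 1) else 0).
Definition conj_c0 (g : 'M[int]_2) : 'M[int]_2 := eps_c0 *m g *m eps_c0.

Definition mob (R : rcfType) (g : 'M[int]_2) (z : R[i]) : R[i] :=
  ((ea g)%:~R * z + (eb g)%:~R) / ((ec g)%:~R * z + (ed g)%:~R).

Definition in_h (R : rcfType) (z : R[i]) : Prop := 0 < complex.Im z.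

Definition real_congruence_group_c0 (G : set 'M[int]_2) : Prop :=
  [/\ is_PSL2Z_subgroup G,
      (forall g, G (conj_c0 g) <-> G g) &
      exists N : nat, [/\ (0 < N)%N,
        (forall g, GammaN N g -> G g) &
        (forall g, GammaN N (conj_c0 g) <-> GammaN N g)]].

(* Stabilizer of tau in Gamma, as a subset of PSL_2(Z): each element is the
   class {g, -g} of a matrix. *)
Definition psl_class (g : 'M[int]_2) : set 'M[int]_2 := [set g; - g].
Definition stabilizer (R : rcfType) (G : set 'M[int]_2) (tau : R[i])
  : set (set 'M[int]_2) :=
  psl_class @` [set g | G g /\ mob g tau = tau].

Definition elliptic_even (R : rcfType) (G : set 'M[int]_2) (tau : R[i]) : Prop :=
  in_h tau /\ exists n : nat, (stabilizer G tau #= `I_(n.*2))%card.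

(* The image of tau in X_Gamma is a real point: c0 fixes its Gamma-orbit. *)
Definition real_point (R : rcfType) (G : set 'M[int]_2) (tau : R[i]) : Prop :=
  exists g, G g /\ mob g tau = c0 tau.

(* Main.v *)
Require Import Defs.
From HB Require Import structures.
From mathcomp Require Import all_boot all_order all_algebra.
From mathcomp Require Import boolp classical_sets cardinality reals.
From mathcomp Require Import complex.
From mathcomp Require Import ring lra zify.
Set Implicit Arguments.
Unset Strict Implicit.
Import Order.TTheory GRing.Theory Num.Theory.
Local Open Scope ring_scope.
From mathcomp Require Import finmap.
Lemma fin_parity (T0 : finType) (f : T0 -> T0) (x0 : T0) :
  involutive f -> f x0 = x0 -> (forall x, f x = x -> x = x0) -> odd #|T0|.
Proof.
move=> finv fx0 fix0.
pose r := @enum_rank T0.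
pose P := [set x | (r x < r (f x))%N].
pose Q := [set x | (r (f x) < r x)%N].
have finj : injective f := can_inj finv.
have eQ : f @: P = Q.
  rewrite (can2_imset_pre _ finv finv); apply/setP => x; rewrite !inE finv //.
have eC : [set~ x0] = P :|: Q.
  apply/setP => x; rewrite !inE /r -neq_ltn val_eqE (inj_eq (@enum_rank_inj T0)).
  apply/idP/idP => [xn|].
    apply/eqP => e; move/negP: xn; apply; apply/eqP; exact: fix0 (esym e).
  by apply: contra => /eqP ->; rewrite fx0.
have dPQ : P :&: Q = finset.set0.
  apply/setP => x; rewrite !inE; apply/negP => /andP[h1 h2].
  by have := ltn_trans h1 h2; rewrite ltnn.
have := cardsC1 x0; rewrite eC cardsU dPQ cards0 subn0 -eQ card_imset //.
have : (0 < #|T0|)%N by apply/card_gt0P; exists x0.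
case: #|T0| => // m _ /= <-.
by rewrite addnn odd_double.
Qed.

Lemma set_parity (T : choiceType) (S : set T) (f : T -> T) (x0 : T) m :
  (forall x, S x -> S (f x)) -> (forall x, S x -> f (f x) = x) -> S x0 ->
  f x0 = x0 -> (forall x, S x -> f x = x -> x = x0) ->
  (S #= `I_m)%card -> odd m.
Proof.
move=> fS finv Sx0 fx0 fix0 cS.
have fin : finite_set S by exists m.
pose F := fset_set S.
have inF x : x \in F <-> S x.
  by rewrite /F in_fset_set // in_setE.
rewrite -(card_fset_set cS) -/F cardfE.
have hx0 : x0 \in F by apply/inF.
have vS (x : F) : S (val x) by apply/inF; exact: valP.
pose g (x : F) : F := insubd x (f (val x)).
have gv (x : F) : val (g x) = f (val x).
  by rewrite /g val_insubd; case: ifPn => // /negP []; apply/inF; exact: fS.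
apply: (@fin_parity _ g [` hx0]%fset).
- by move=> x; apply/val_inj; rewrite !gv finv.
- by apply/val_inj; rewrite gv /= fx0.
- move=> x /(congr1 val); rewrite gv => e; apply/val_inj => /=.
  exact: fix0 (vS x) e.
Qed.
Lemma det2 (R : comNzRingType) (g : 'M[R]_2) : \det g = g 0 0 * g 1 1 - g 0 1 * g 1 0.
Proof.
rewrite (expand_det_row _ 0) !big_ord_recl big_ord0 /cofactor !det_mx11 !mxE /=.
rewrite (_ : lift 0 0 = 1 :> 'I_2); last by apply/val_inj.
rewrite (_ : lift 1 0 = 0 :> 'I_2); last by apply/val_inj.
by rewrite /bump /= expr0 expr1 mul1r mulN1r addr0 mulrN.
Qed.

Lemma sum2 (V : nmodType) (F : 'I_2 -> V) : \sum_(k < 2) F k = F 0 + F 1.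
Proof.
rewrite !big_ord_recl big_ord0 addr0.
by rewrite (_ : lift ord0 ord0 = 1 :> 'I_2); last by apply/val_inj.
Qed.

Lemma mx2_eq (A B : 'M[int]_2) : A 0 0 = B 0 0 -> A 0 1 = B 0 1 ->
  A 1 0 = B 1 0 -> A 1 1 = B 1 1 -> A = B.
Proof.
move=> h00 h01 h10 h11; apply/matrixP => i j.
case: i => [[|[|//]] Hi]; case: j => [[|[|//]] Hj].
- by rewrite (_ : Ordinal Hi = 0); [rewrite (_ : Ordinal Hj = 0) //|]; apply: val_inj.
- by rewrite (_ : Ordinal Hi = 0); [rewrite (_ : Ordinal Hj = 1) //|]; apply: val_inj.
- by rewrite (_ : Ordinal Hi = 1); [rewrite (_ : Ordinal Hj = 0) //|]; apply: val_inj.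
- by rewrite (_ : Ordinal Hi = 1); [rewrite (_ : Ordinal Hj = 1) //|]; apply: val_inj.
Qed.

Definition adj2 (g : 'M[int]_2) : 'M[int]_2 := \matrix_(i < 2, j < 2)
  (if (i == 0) && (j == 0) then g 1 1 else if (i == 0) then - g 0 1
   else if (j == 0) then - g 1 0 else g 0 0).

Lemma adj2E g : [/\ adj2 g 0 0 = g 1 1, adj2 g 0 1 = - g 0 1,
   adj2 g 1 0 = - g 1 0 & adj2 g 1 1 = g 0 0].
Proof. by rewrite !mxE. Qed.

Lemma adj2E' g : [/\ ea (adj2 g) = ed g, eb (adj2 g) = - eb g,
   ec (adj2 g) = - ec g & ed (adj2 g) = ea g].
Proof. by rewrite /ea /eb /ec /ed !mxE. Qed.

Lemma adj2K g : adj2 (adj2 g) = g.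
Proof.
have [a b c d] := adj2E g; have [a' b' c' d'] := adj2E (adj2 g).
by apply: mx2_eq; rewrite ?a' ?b' ?c' ?d' ?a ?b ?c ?d ?opprK.
Qed.

Lemma adj2N g : adj2 (- g) = - adj2 g.
Proof.
have [a b c d] := adj2E g; have [a' b' c' d'] := adj2E (- g).
by apply: mx2_eq; rewrite ?a' ?b' ?c' ?d' !mxE ?a ?b ?c ?d.
Qed.

Lemma adj2_inv g : \det g = 1 -> invmx g = adj2 g.
Proof.
move=> dg.
have u : g \in unitmx by rewrite unitmxE dg unitr1.
have e : g *m adj2 g = 1%:M.
  have [a b c d] := adj2E g; move: dg; rewrite det2 => dg.
  apply: mx2_eq; rewrite !mxE sum2 ?a ?b ?c ?d /=; rewrite -?dg; ring.
by rewrite -(mulmx1 (invmx g)) -e mulmxA mulVmx // mul1mx.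
Qed.

Lemma det_adj2 g : \det (adj2 g) = \det g.
Proof. have [a b c d] := adj2E g; rewrite !det2 a b c d; ring. Qed.
Local Open Scope complex_scope.
Lemma ci (R : rcfType) (k : int) : (k%:~R : R[i]) = (k%:~R : R) +i* 0.
Proof. by rewrite -(rmorph_int (real_complex R) k). Qed.

Lemma den_nz (R : rcfType) (tau : R[i]) (c d : int) : 0 < complex.Im tau ->
  (c != 0) || (d != 0) -> c%:~R * tau + d%:~R != 0.
Proof.
case: tau => u v /= hv hcd; rewrite !ci; apply/eqP => /eqP.
rewrite eq_complex /= => /andP[/eqP e1 /eqP e2].
move: e2; rewrite mul0r !addr0 => /eqP; rewrite mulf_eq0 (gt_eqF hv) orbF intr_eq0.
move=> /eqP c0'; move: e1; rewrite c0' mul0r mul0r subr0 add0r => /eqP.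
rewrite intr_eq0 => /eqP d0; move: hcd; by rewrite c0' d0.
Qed.

Lemma ad_eq (R : rcfType) (tau : R[i]) (a b c d : int) : 0 < complex.Im tau ->
  a%:~R * tau + b%:~R = c0 tau * (c%:~R * tau + d%:~R) -> a = d.
Proof.
case: tau => u v /= hv; rewrite !ci /c0 => /(congr1 (@complex.Im R)) /= e.
apply/eqP; rewrite -(eqr_int R); apply/eqP.
apply: (mulIf (lt0r_neq0 hv)); lra.
Qed.

Lemma cd_nz (g : 'M[int]_2) : \det g = 1 -> (g 1 0 != 0) || (g 1 1 != 0).
Proof.
rewrite det2; case: eqP => [->|] //; case: eqP => [->|] //.
by rewrite !mulr0 subr0.
Qed.

Lemma fix_eq (R : rcfType) (tau w : R[i]) (g : 'M[int]_2) :
  0 < complex.Im tau -> \det g = 1 -> mob g tau = w ->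
  (ea g)%:~R * tau + (eb g)%:~R = w * ((ec g)%:~R * tau + (ed g)%:~R).
Proof.
move=> hv dg <-; rewrite /mob divfK //; exact: den_nz hv (cd_nz dg).
Qed.

Lemma adj_fix (R : rcfType) (tau : R[i]) (g : 'M[int]_2) :
  0 < complex.Im tau -> \det g = 1 -> mob g tau = tau -> mob (adj2 g) tau = tau.
Proof.
move=> hv dg gf; have E := fix_eq hv dg gf.
have [a b c d] := adj2E' g.
have dn : (ec (adj2 g))%:~R * tau + (ed (adj2 g))%:~R != 0.
  apply: den_nz hv _; apply: cd_nz; by rewrite det_adj2.
rewrite /mob; apply/(mulIf dn); rewrite divfK //.
rewrite a b c d !intrN.
apply/eqP; rewrite -subr_eq0; apply/eqP.
transitivity (- (((ea g)%:~R * tau + (eb g)%:~R) -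
   tau * ((ec g)%:~R * tau + (ed g)%:~R))); first by ring.
by rewrite E subrr oppr0.
Qed.

Lemma nt (M : nat) (ah bh ch x y z : int) : (2 < M)%N ->
  (M%:Z %| ch)%Z -> (M%:Z %| z)%Z -> ah * ah - bh * ch = 1 ->
  x * (- x) - y * z = 1 -> ah * x + bh * z = ch * y + ah * (- x) -> False.
Proof.
move=> M2 /dvdzP[k1 ->] /dvdzP[k2 ->] e1 e2 e3.
have h2 : (M%:Z %| 2)%Z.
  apply/dvdzP; exists (-(k1 * y - bh * k2) * ah * x
     - 2 * (bh * k1 + y * k2 + bh * k1 * y * k2 * M%:Z)).
  have eq : (-(k1 * y - bh * k2) * ah * x
     - 2 * (bh * k1 + y * k2 + bh * k1 * y * k2 * M%:Z)) * M%:Z - 2 =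
    2 * (ah * ah - bh * (k1 * M%:Z) - 1) * ((x * (- x) - y * (k2 * M%:Z) - 1) + 1 + y * (k2 * M%:Z))
    + 2 * (1 + bh * (k1 * M%:Z)) * (x * (- x) - y * (k2 * M%:Z) - 1)
    + ((ah * x + bh * (k2 * M%:Z)) - (k1 * M%:Z * y + ah * (- x))) * ah * x.
    ring.
  move: eq; rewrite e1 e2 e3 !subrr !mulr0 !mul0r !addr0 => /eqP.
  by rewrite subr_eq0 => /eqP e; exact: esym e.
move: h2; rewrite dvdzE /= => /dvdn_leq; lia.
Qed.

Local Open Scope classical_set_scope.
Lemma imclass (g : 'M[int]_2) : adj2 @` psl_class g = psl_class (adj2 g).
Proof.
rewrite /psl_class; apply/seteqP; split => x /=.
- by case => y [->|->] <-; [left | right; rewrite adj2N].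
- case => ->; [exists g; [left|] | exists (-g); [right|rewrite adj2N]] => //.
Qed.

Lemma class_eq (a b : 'M[int]_2) : psl_class a = psl_class b -> a = b \/ a = - b.
Proof. by move=> e; have : psl_class b a by rewrite -e; left. Qed.

Lemma mob1 (R : rcfType) (tau : R[i]) : mob 1%:M tau = tau.
Proof. by rewrite /mob /ea /eb /ec /ed !mxE /= mul1r mul0r add0r addr0 divr1. Qed.

Lemma adj21 : adj2 1%:M = 1%:M.
Proof. by apply: mx2_eq; rewrite !mxE. Qed.

Theorem proposition5p11 (R : realType) (G : set 'M[int]_2)
  (HG : real_congruence_group_c0 G)
  (H0 : exists M : nat, (2 < M)%N /\ (forall g, G g -> Gamma0 M g)) :
  ~ (exists tau : R[i], elliptic_even G tau /\ real_point G tau).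
Proof.
case: H0 => M [M2 G0].
case: HG => [[Gsl G1 Gmul Ginv GN] _ _].
move=> [tau [[inh [n cS]] [h [Gh hfix]]]].
have dh : \det h = 1 := Gsl h Gh.
have Eh := fix_eq inh dh hfix.
have Ah := ad_eq inh Eh.
have key : forall g, G g -> mob g tau = tau -> ea g + ed g != 0.
  move=> g Gg gfix; apply/negP => /eqP tr0.
  have dg : \det g = 1 := Gsl g Gg.
  have Eg := fix_eq inh dg gfix.
  have Ghg := Gmul h g Gh Gg.
  have ent : [/\ ea (h *m g) = ea h * ea g + eb h * ec g,
     eb (h *m g) = ea h * eb g + eb h * ed g,
     ec (h *m g) = ec h * ea g + ed h * ec g &
     ed (h *m g) = ec h * eb g + ed h * ed g].
    by rewrite /ea /eb /ec /ed !mxE !sum2.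
  have Ehg : (ea (h *m g))%:~R * tau + (eb (h *m g))%:~R =
      c0 tau * ((ec (h *m g))%:~R * tau + (ed (h *m g))%:~R).
    case: ent => -> -> -> ->; rewrite !intrD !intrM.
    apply/eqP; rewrite -subr_eq0; apply/eqP.
    transitivity (((ec g)%:~R * tau + (ed g)%:~R) *
        (((ea h)%:~R * tau + (eb h)%:~R) - c0 tau * ((ec h)%:~R * tau + (ed h)%:~R))
      + ((ea h)%:~R - c0 tau * (ec h)%:~R) *
        (((ea g)%:~R * tau + (eb g)%:~R) - tau * ((ec g)%:~R * tau + (ed g)%:~R)));
      first by ring.
    by rewrite Eh Eg !subrr !mulr0 addr0.
  have Ahg := ad_eq inh Ehg.
  case: ent Ahg => -> _ _ ->; rewrite -Ah => Ahg.
  have [_ Mh] := G0 h Gh; have [_ Mg] := G0 g Gg.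
  have ed_g : ed g = - ea g by apply/eqP; rewrite -addr_eq0 addrC tr0.
  apply: (nt M2 Mh Mg (ah := ea h) (bh := eb h) (x := ea g) (y := eb g)).
  - by move: dh; rewrite det2 -/(ea h) -/(ed h) -Ah.
  - by move: dg; rewrite det2 -ed_g.
  - by move: Ahg; rewrite ed_g.
have odd2 : odd n.*2.
  apply: (@set_parity _ (stabilizer G tau) (fun C => adj2 @` C)
            (psl_class 1%:M) _ _ _ _ _ _ cS).
  - move=> C [g [Gg gf] <-]; rewrite imclass.
    exists (adj2 g) => //; split; last exact: adj_fix inh (Gsl g Gg) gf.
    by rewrite -adj2_inv ?Gsl //; exact: Ginv.
  - by move=> C [g _ <-]; rewrite !imclass adj2K.
  - by exists 1%:M => //; split; [exact: G1 | exact: mob1].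
  - by rewrite imclass adj21.
  - move=> C [g [Gg gf] <-]; rewrite imclass => /class_eq [e|e].
    + have [a b c d] := adj2E' g.
      rewrite e in a b c d.
      have b0 : eb g = 0 by lia.
      have c0' : ec g = 0 by lia.
      have dg : \det g = 1 := Gsl g Gg; move: dg; rewrite det2 -/(ea g) -/(eb g) -/(ec g) -/(ed g).
      rewrite b0 mul0r subr0 -a => dg.
      have : (ea g = 1) \/ (ea g = -1) by nia.
      case => e1.
      * have -> : g = 1%:M by apply: mx2_eq; rewrite !mxE /=;
          rewrite -?/(ea g) -?/(eb g) -?/(ec g) -?/(ed g) ?b0 ?c0' -?a ?e1.
        done.
      * have -> : g = - 1%:M by apply: mx2_eq; rewrite !mxE /=;
          rewrite -?/(ea g) -?/(eb g) -?/(ec g) -?/(ed g) ?b0 ?c0' -?a ?e1.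
        rewrite /psl_class opprK; apply/seteqP; split => x /=; tauto.
    + exfalso; have [a _ _ d] := adj2E' g.
      move/negP: (key g Gg gf); apply; rewrite -a e.
      by rewrite /ea /ed mxE; apply/eqP; exact: (addrN (g 0 0)).
by rewrite odd_double in odd2.
Qed.
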